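(* Let $N\ge 2$ and $x=(x_1,\dots,x_{2N})\in(\mathbb{R}_{>0})^{2N}$. Put $H_0(x)=0$ and, for $1\le k\le N$, $$H_k(x)=\min_{\substack{1\le i_1\triangleleft i_2\triangleleft\cdots\triangleleft i_k\le 2N\\ (i_1,i_k)\neq(1,2N)}}\big(x_{i_1}+x_{i_2}+\cdots+x_{i_k}\big).$$ Then $H_k(x)+H_{k+2}(x)\ge 2H_{k+1}(x)$ for all $0\le k\le N-2$.
   Context: For integers $i,j$, $i\triangleleft j$ means $i+1<j$. The minimum runs over index tuples $1\le i_1<\dots<i_k\le 2N$ with consecutive indices differing by at least $2$, excluding tuples with $i_1=1$ and $i_k=2N$ simultaneously. *)

(* Defs.v *)
From HB Require Import structures.
From mathcomp Require Import all_boot all_order all_algebra.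
Set Implicit Arguments. Unset Strict Implicit. Unset Printing Implicit Defensive.
Import Order.TTheory GRing.Theory Num.Theory.
Local Open Scope ring_scope.

(* Indices are 0-based: position i : 'I_(2N) stands for the paper's index i+1.
   An index tuple 1 <= i_1 < ... < i_k <= 2N with consecutive differences >= 2
   is identified with the set S = {i_1,...,i_k} of its entries. *)

Definition admissible (n k : nat) (A : {set 'I_n}) : bool :=
  [&& #|A| == k,
      [forall i : 'I_n, forall j : 'I_n,
          ((i \in A) && (j \in A)) ==> ((val i).+1 != val j)]
    & ~~ ([exists i in A, val i == 0%N] && [exists j in A, val j == n.-1])].

Definition seqmin (R : realDomainType) (l : seq R) : R :=
  \big[Order.min/head 0 l]_(v <- l) v.

Definition H (R : realDomainType) (N : nat) (x : 'I_(2 * N) -> R) (k : nat) : R :=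
  if k == 0%N then 0
  else seqmin (map (fun A : {set 'I_(2 * N)} => \sum_(i in A) x i)
                 (enum [set A : {set 'I_(2 * N)} | admissible k A])).

(* Main.v *)
Require Import Defs.
From HB Require Import structures.
From mathcomp Require Import all_boot all_order all_algebra.
From mathcomp Require Import zify ring lra.
Import Order.TTheory GRing.Theory Num.Theory.

Definition periodic n (f : nat -> bool) := forall m, f (m + n) = f m.
Definition indep (f : nat -> bool) := forall m, ~~ (f m && f m.+1).

Lemma per_mod n f : periodic n f -> forall m, f (m %% n) = f m.
Proof.
move=> hp m; rewrite [in RHS](divn_eq m n).
elim: (m %/ n) => [|q IH]; first by rewrite mul0n add0n.
by rewrite mulSn -addnA addnC hp.
Qed.

Lemma sum_shift1 n (g : nat -> nat) : g n = g 0 ->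
  \sum_(0 <= m < n) g m.+1 = \sum_(0 <= m < n) g m.
Proof.
case: n => [|n] h; first by rewrite !big_geq.
by rewrite big_nat_recr //= big_nat_recl //= h addnC.
Qed.

Lemma sum_shift n (f : nat -> nat) : (forall m, f (m + n) = f m) ->
  forall s, \sum_(0 <= m < n) f (m + s) = \sum_(0 <= m < n) f m.
Proof.
move=> hp; elim=> [|s IH].
  by apply: eq_bigr => m _; rewrite addn0.
rewrite -IH -(@sum_shift1 n (fun m => f (m + s))) /=.
  by apply: eq_bigr => m _; rewrite addnS addSn.
by rewrite add0n addnC hp.
Qed.

Lemma modS_small n m : 0 < n -> m.+1 %% n = if (m %% n).+1 < n then (m %% n).+1 else 0.
Proof.
move=> n0; have lt := ltn_pmod m n0.
rewrite -addn1 -modnDml addn1.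
case: ifP => h; first by rewrite modn_small.
have -> : (m %% n).+1 = n by apply/eqP; rewrite eqn_leq lt; rewrite ltnNge in h; move: h; case: (n <= _).
by rewrite modnn.
Qed.


Lemma swap_indep n (a b : nat -> bool) t1 t2 : 0 < n -> t1 < t2 -> t2 <= n ->
  indep a -> indep b ->
  (forall m, t1 %% n = m.+1 %% n -> ~~ ((a m || b m) && (a m.+1 || b m.+1))) ->
  (forall m, t2 %% n = m.+1 %% n -> ~~ ((a m || b m) && (a m.+1 || b m.+1))) ->
  indep (fun m => if (t1 <= m %% n) && (m %% n < t2) then b m else a m).
Proof.
move=> n0 l12 l2n ia ib H1 H2 m /=.
have hu := ltn_pmod m n0; have hv := @modS_small n m n0.
move: (m %% n) hu hv => u hu hv.
case E: (u.+1 < n) in hv; rewrite hv.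
- case: ifP => h1; case: ifP => h2.
  + exact: ib.
  + have e : t2 %% n = m.+1 %% n.
      rewrite hv modn_small; lia.
    by move: (H2 m e); case: (a m); case: (b m); case: (a m.+1); case: (b m.+1).
  + have e : t1 %% n = m.+1 %% n.
      rewrite hv modn_small; lia.
    by move: (H1 m e); case: (a m); case: (b m); case: (a m.+1); case: (b m.+1).
  + exact: ia.
- case: ifP => h1; case: ifP => h2.
  + exact: ib.
  + have e : t2 %% n = m.+1 %% n.
      rewrite hv. have -> : t2 = n by lia. by rewrite modnn.
    by move: (H2 m e); case: (a m); case: (b m); case: (a m.+1); case: (b m.+1).
  + have e : t1 %% n = m.+1 %% n.
      rewrite hv. have -> : t1 = 0 by lia. by rewrite mod0n.
    by move: (H1 m e); case: (a m); case: (b m); case: (a m.+1); case: (b m.+1).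
  + exact: ia.
Qed.


Lemma core_lin n (a b : nat -> bool) : 0 < n -> periodic n a -> periodic n b ->
  indep a -> indep b ->
  ~~ ((a n.-1 || b n.-1) && (a 0 || b 0)) ->
  \sum_(0 <= m < n) nat_of_bool (b m) = \sum_(0 <= m < n) nat_of_bool (a m) + 2 ->
  exists c d : nat -> bool, [/\ periodic n c, periodic n d, indep c & indep d] /\
    (forall m, nat_of_bool (c m) + d m = a m + b m) /\
    \sum_(0 <= m < n) nat_of_bool (c m) = \sum_(0 <= m < n) nat_of_bool (a m) + 1.
Proof.
move=> n0 pa pb ia ib g0 hs.
pose gd t := ~~ ((a (t + n.-1) || b (t + n.-1)) && (a t || b t)).
have pab : forall m, (a (m %% n) || b (m %% n)) = (a m || b m).
  by move=> m; rewrite (per_mod _ _ pa) (per_mod _ _ pb).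
have gdP : forall t m, gd t -> t %% n = m.+1 %% n ->
    ~~ ((a m || b m) && (a m.+1 || b m.+1)).
  move=> t m h e.
  have e1 : (a m.+1 || b m.+1) = (a t || b t) by rewrite -pab -e pab.
  have em : m %% n = (t + n.-1) %% n.
    rewrite -modnDml e modnDml addSnnS prednK //. by rewrite modnDr.
  have e2 : (a m || b m) = (a (t + n.-1) || b (t + n.-1)) by rewrite -pab em pab.
  by rewrite e1 e2.
have gd0 : gd 0 by rewrite /gd add0n.
have gdn : gd n.
  have an : a n = a 0 by rewrite -{1}(add0n n) pa.
  have bn : b n = b 0 by rewrite -{1}(add0n n) pb.
  by rewrite /gd addnC pa pb an bn.
pose SA t := \sum_(0 <= m < t) nat_of_bool (a m).
pose SB t := \sum_(0 <= m < t) nat_of_bool (b m).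
have exP : exists t, gd t && (SA t < SB t).
  by exists n; rewrite gdn /SA /SB hs; lia.
case: (ex_minnP exP) => t2 /andP[g2 lt2] min2.
have t2n : t2 <= n by apply: min2; rewrite gdn /SA /SB hs; lia.
have t2p : 0 < t2.
  case: t2 lt2 {g2 min2 t2n} => //. by rewrite /SA /SB !big_geq.
have exQ : exists t, gd t && (t < t2) by exists 0; rewrite gd0.
have ubQ : forall t, gd t && (t < t2) -> t <= t2 by move=> t /andP[_ h]; lia.
case: (ex_maxnP exQ ubQ) => t1 /andP[g1 l12] max1.
have between : forall t, t1 < t -> t < t2 -> ~~ gd t.
  move=> t h1 h2; apply/negP => g.
  have := max1 t; rewrite g h2 => /(_ isT); lia.
have ge1 : SB t1 <= SA t1.
  rewrite leqNgt; apply/negP => h.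
  have := min2 t1; rewrite g1 h => /(_ isT); lia.
pose sa t := \sum_(t1 <= m < t) nat_of_bool (a m).
pose sb t := \sum_(t1 <= m < t) nat_of_bool (b m).
have inv : forall j, t1 + j.+1 <= t2 ->
   (sb (t1 + j.+1) == sa (t1 + j.+1))
   || ((sb (t1 + j.+1) == (sa (t1 + j.+1)).+1) && b (t1 + j) && ~~ a (t1 + j))
   || ((sa (t1 + j.+1) == (sb (t1 + j.+1)).+1) && a (t1 + j) && ~~ b (t1 + j)).
  elim=> [|j IH] hj.
    rewrite /sa /sb addn1 big_nat1 big_nat1 addn0.
    by case: (a t1); case: (b t1).
  have IH' := IH ltac:(clear -hj; lia).
  have ng := between (t1 + j.+1) ltac:(clear; lia) ltac:(clear -hj; lia).
  have en : t1 + j.+1 + n.-1 = t1 + j + n by clear -n0; lia.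
  have ea : a (t1 + j.+1 + n.-1) = a (t1 + j) by rewrite en pa.
  have eb : b (t1 + j.+1 + n.-1) = b (t1 + j) by rewrite en pb.
  move: ng; rewrite /gd ea eb negbK => ng.
  have iat := ia (t1 + j); have ibt := ib (t1 + j).
  rewrite -addnS in iat ibt.
  rewrite /sa /sb (addnS t1 j.+1) big_nat_recr ?leq_addr //= big_nat_recr ?leq_addr //=.
  rewrite /sa /sb in IH'.
  move: IH' ng iat ibt.
  move: (\sum_(t1 <= m < t1 + j.+1) nat_of_bool (a m)) => A.
  move: (\sum_(t1 <= m < t1 + j.+1) nat_of_bool (b m)) => B.
  move: (a (t1 + j)) (b (t1 + j)) (a (t1 + j.+1)) (b (t1 + j.+1)) => x1 x2 x3 x4.
  clear.
  case: x1; case: x2; case: x3; case: x4 => //=;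
   rewrite ?addn0 ?addn1 ?andbT ?andbF ?orbF //= ; try lia.
have seg : sb t2 <= (sa t2).+1.
  have := inv (t2 - t1).-1 ltac:(clear -l12; lia).
  have -> : t1 + (t2 - t1).-1.+1 = t2 by clear -l12; lia.
  move: (sb t2) (sa t2) => B A; clear.
  case/orP => [/orP[/eqP->|]|]; first lia.
    by case/andP => /andP[/eqP-> _] _; lia.
  by case/andP => /andP[/eqP-> _] _; lia.
have cA : SA t2 = SA t1 + sa t2.
  by rewrite /SA /sa (big_cat_nat (leq0n t1) (ltnW l12)).
have cB : SB t2 = SB t1 + sb t2.
  by rewrite /SB /sb (big_cat_nat (leq0n t1) (ltnW l12)).
have key : sb t2 = (sa t2).+1.
  move: seg cA cB ge1 lt2.
  move: (sb t2) (sa t2) (SA t1) (SA t2) (SB t1) (SB t2) => ? ? ? ? ? ?.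
  clear; lia.
pose c m := if (t1 <= m %% n) && (m %% n < t2) then b m else a m.
pose d m := if (t1 <= m %% n) && (m %% n < t2) then a m else b m.
exists c, d; split; [split|split].
- by move=> m; rewrite /c modnDr pa pb.
- by move=> m; rewrite /d modnDr pa pb.
- by apply: swap_indep => // m e; [exact: gdP g1 e | exact: gdP g2 e].
- apply: swap_indep => // m e; rewrite [b m || _]orbC [b m.+1 || _]orbC;
    [exact: gdP g1 e | exact: gdP g2 e].
- by move=> m; rewrite /c /d; case: ifP => _; rewrite // addnC.
- have l1n : t1 <= n by clear -l12 t2n; lia.
  have sp : forall F : nat -> nat, \sum_(0 <= m < n) F m =
      \sum_(0 <= m < t1) F m + \sum_(t1 <= m < t2) F m + \sum_(t2 <= m < n) F m.
    move=> F; rewrite (big_cat_nat (leq0n t1) l1n) (big_cat_nat (ltnW l12) t2n).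
    by rewrite /= addnA.
  rewrite !sp.
  have e1 : \sum_(0 <= m < t1) nat_of_bool (c m) = \sum_(0 <= m < t1) nat_of_bool (a m).
    apply: eq_big_nat => m /andP[_ hm]; rewrite /c modn_small; last by clear -hm l12 t2n; lia.
    by case: ifP => // h; clear -h hm; lia.
  have e2 : \sum_(t1 <= m < t2) nat_of_bool (c m) = \sum_(t1 <= m < t2) nat_of_bool (b m).
    apply: eq_big_nat => m /andP[h1 hm]; rewrite /c modn_small; last by clear -hm t2n; lia.
    by rewrite h1 hm.
  have e3 : \sum_(t2 <= m < n) nat_of_bool (c m) = \sum_(t2 <= m < n) nat_of_bool (a m).
    apply: eq_big_nat => m /andP[h1 hm]; rewrite /c modn_small; last by clear -hm; lia.
    by case: ifP => // h; clear -h h1; lia.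
  rewrite e1 e2 e3. rewrite /sa /sb in key. rewrite key; clear; lia.
Qed.


Lemma per_add n f : periodic n f -> forall q m, f (m + q * n) = f m.
Proof.
move=> hp; elim=> [|q IH] m; first by rewrite mul0n addn0.
by rewrite mulSn addnCA [n + _]addnC hp.
Qed.

Lemma core n (a b : nat -> bool) : 0 < n -> periodic n a -> periodic n b ->
  indep a -> indep b ->
  \sum_(0 <= m < n) nat_of_bool (b m) = \sum_(0 <= m < n) nat_of_bool (a m) + 2 ->
  exists c d : nat -> bool, [/\ periodic n c, periodic n d, indep c & indep d] /\
    (forall m, nat_of_bool (c m) + d m = a m + b m) /\
    \sum_(0 <= m < n) nat_of_bool (c m) = \sum_(0 <= m < n) nat_of_bool (a m) + 1.
Proof.
move=> n0 pa pb ia ib hs.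
have fa : forall m, nat_of_bool (a (m + n)) = a m by move=> m; rewrite pa.
have fb : forall m, nat_of_bool (b (m + n)) = b m by move=> m; rewrite pb.
case: (boolP [exists r : 'I_n, ~~ ((a r || b r) && (a r.+1 || b r.+1))]).
- case/existsP => r gr.
  pose a' m := a (m + r.+1). pose b' m := b (m + r.+1).
  have pa' : periodic n a' by move=> m; rewrite /a' addnAC pa.
  have pb' : periodic n b' by move=> m; rewrite /b' addnAC pb.
  have ia' : indep a' by move=> m; rewrite /a' addSn; exact: ia.
  have ib' : indep b' by move=> m; rewrite /b' addSn; exact: ib.
  have g0 : ~~ ((a' n.-1 || b' n.-1) && (a' 0 || b' 0)).
    have e : n.-1 + r.+1 = r + n by clear -n0; lia.
    by rewrite /a' /b' e pa pb !add0n.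
  have hs' : \sum_(0 <= m < n) nat_of_bool (b' m) = \sum_(0 <= m < n) nat_of_bool (a' m) + 2.
    by rewrite /a' /b' (sum_shift n _ fa) (sum_shift n _ fb).
  have [c' [d' [[pc' pd' ic' id'] [pt sm]]]] := @core_lin n a' b' n0 pa' pb' ia' ib' g0 hs'.
  pose s := r.+1 * n.-1.
  have es : forall m, m + s + r.+1 = m + r.+1 * n.
    by move=> m; rewrite /s -addnA -mulnSr prednK.
  exists (fun m => c' (m + s)), (fun m => d' (m + s)); split; [split|split].
  + by move=> m /=; rewrite addnAC pc'.
  + by move=> m /=; rewrite addnAC pd'.
  + by move=> m /=; rewrite addSn; exact: ic'.
  + by move=> m /=; rewrite addSn; exact: id'.
  + move=> m /=; rewrite pt /a' /b' es.
    by rewrite (per_add _ _ pa) (per_add _ _ pb).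
  + have fc : forall m, nat_of_bool (c' (m + n)) = c' m by move=> m; rewrite pc'.
    rewrite (sum_shift n _ fc) sm.
    have fa' : forall m, nat_of_bool (a' (m + n)) = a' m by move=> m; rewrite pa'.
    by rewrite /a' (sum_shift n _ fa).
- rewrite negb_exists => /forallP h.
  have bm : forall m, b m = a m.+1.
    move=> m; have := h (Ordinal (ltn_pmod m n0)); rewrite negbK /=.
    have e1 : forall f, periodic n f -> f (m %% n).+1 = f m.+1.
      move=> f pf; rewrite -(per_mod _ _ pf m.+1) -(per_mod _ _ pf (m %% n).+1).
      by rewrite -addn1 modnDml addn1.
    rewrite (per_mod _ _ pa) (per_mod _ _ pb) (e1 _ pa) (e1 _ pb).
    move: (ia m) (ib m); case: (a m); case: (b m); case: (a m.+1); case: (b m.+1) => //.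
  have : \sum_(0 <= m < n) nat_of_bool (b m) = \sum_(0 <= m < n) nat_of_bool (a m).
    rewrite -(sum_shift n _ fa 1).
    by apply: eq_bigr => m _; rewrite bm addn1.
  rewrite hs; clear; lia.
Qed.


Definition pos n (n0 : (0 < n)%N) m : 'I_n := Ordinal (ltn_pmod m n0).
Arguments pos {n}.
Definition ind n (n0 : (0 < n)%N) (S : {set 'I_n}) m := pos n0 m \in S.
Arguments ind {n}.

Lemma ind_per n (n0 : (0 < n)%N) (S : {set 'I_n}) : periodic n (ind n0 S).
Proof.
move=> m; rewrite /ind (_ : pos n0 (m + n) = pos n0 m) //; apply/val_inj => /=; exact: modnDr.
Qed.

Lemma ind_val n (n0 : (0 < n)%N) (S : {set 'I_n}) (i : 'I_n) : ind n0 S i = (i \in S).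
Proof.
rewrite /ind (_ : pos n0 i = i) //; apply/val_inj => /=; exact: modn_small.
Qed.

Lemma card_ind n (n0 : (0 < n)%N) (S : {set 'I_n}) :
  #|S| = \sum_(0 <= m < n) nat_of_bool (ind n0 S m).
Proof.
rewrite -sum1_card big_mkcond /= big_mkord.
by apply: eq_bigr => i _; rewrite ind_val; case: (i \in S).
Qed.

Lemma sum_ind (R : realDomainType) n (n0 : (0 < n)%N) (S : {set 'I_n}) (x : 'I_n -> R) :
  (\sum_(i in S) x i = \sum_(i < n) (ind n0 S i)%:R * x i)%R.
Proof.
rewrite big_mkcond /=.
by apply: eq_bigr => i _; rewrite ind_val; case: (i \in S); rewrite ?mul1r ?mul0r.
Qed.

Definition setc n (c : nat -> bool) : {set 'I_n} := [set i : 'I_n | c (val i)].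

Lemma ind_setc n (n0 : (0 < n)%N) c : periodic n c -> forall m, ind n0 (setc n c) m = c m.
Proof. by move=> pc m; rewrite /ind inE /= (per_mod _ _ pc). Qed.

Lemma adm_indep n (n0 : (0 < n)%N) k (S : {set 'I_n}) : admissible k S -> indep (ind n0 S).
Proof.
move=> /and3P[_ /forallP h1 h0] m; rewrite /ind.
have hv := @modS_small n m n0.
have hu := ltn_pmod m n0.
case E: ((m %% n).+1 < n) in hv.
- have := h1 (pos n0 m) => /forallP /(_ (pos n0 m.+1)) /implyP h.
  apply/negP => /h; by rewrite /= hv eqxx.
- apply/negP => /andP[h h']; move/negP: h0; apply; apply/andP; split; apply/existsP.
  + by exists (pos n0 m.+1); rewrite h' /= hv.
  + exists (pos n0 m); rewrite h /=; apply/eqP; move/negbT: E; clear -hu; lia.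
Qed.

Lemma indep_adm n (n0 : (0 < n)%N) k (S : {set 'I_n}) : #|S| = k -> indep (ind n0 S) -> admissible k S.
Proof.
move=> hc hi; apply/and3P; split.
- by rewrite hc.
- apply/forallP => i; apply/forallP => j; apply/implyP => /andP[iS jS].
  apply/negP => /eqP e.
  have := hi i; rewrite /ind.
  have -> : pos n0 i = i by apply/val_inj; simpl; rewrite modn_small.
  have -> : pos n0 i.+1 = j.
  by apply/val_inj; simpl; rewrite e modn_small //; exact: ltn_ord.
  by move=> /negP; apply; apply/andP.
- apply/negP => /andP[/existsP[i /andP[iS /eqP i0]] /existsP[j /andP[jS /eqP jn]]].
  have := hi n.-1; rewrite /ind.
  have -> : pos n0 n.-1 = j by apply/val_inj; simpl; rewrite jn modn_small // prednK.
  have -> : pos n0 n.-1.+1 = i by apply/val_inj; simpl; rewrite i0 prednK // modnn.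
  by move=> /negP; apply; apply/andP.
Qed.

Lemma count_even j N : (j <= N)%N ->
  \sum_(0 <= m < 2 * N) nat_of_bool (~~ odd m && (m < 2 * j)%N) = j.
Proof.
move=> jN.
rewrite (big_cat_nat (leq0n (2 * j)) (_ : 2 * j <= 2 * N)%N); last by clear -jN; lia.
have z : \sum_(2 * j <= m < 2 * N) nat_of_bool (~~ odd m && (m < 2 * j)%N) = 0.
  rewrite big_nat_cond big1 // => m /andP[/andP[h1 h2] _]; by rewrite ltnNge h1 andbF.
rewrite /= z addn0.
have -> : \sum_(0 <= m < 2 * j) nat_of_bool (~~ odd m && (m < 2 * j)%N) =
          \sum_(0 <= m < 2 * j) nat_of_bool (~~ odd m).
  by apply: eq_big_nat => m /andP[_ h]; rewrite h andbT.
clear jN z; elim: j => [|j IH]; first by rewrite big_geq.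
rewrite (_ : 2 * j.+1 = (2 * j).+2)%N; last by clear; lia.
rewrite big_nat_recr // big_nat_recr //= IH mul2n odd_double /=.
by clear; lia.
Qed.

Lemma exists_adm N (N0 : (0 < 2 * N)%N) j : (j <= N)%N ->
  exists S : {set 'I_(2 * N)}, admissible j S.
Proof.
move=> jN.
pose S := [set i : 'I_(2 * N) | ~~ odd i && (i < 2 * j)%N].
exists S; apply: (@indep_adm (2 * N) N0 j S).
- rewrite (card_ind _ N0) -(@count_even j N jN).
  apply: eq_big_nat => m /andP[_ hm]; rewrite /ind inE /= modn_small //.
- move=> m; rewrite /ind !inE /=.
  have hv := @modS_small (2 * N) m N0.
  have hu := ltn_pmod m N0.
  case E: ((m %% (2 * N)).+1 < 2 * N)%N in hv; rewrite hv.
  + by rewrite oddS; case: (odd _); rewrite ?andbF.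
  + have e : ((m %% (2 * N)).+1 = 2 * N)%N by move/negbT: E; clear -hu; lia.
    have : odd (m %% (2 * N)).+1 = false by rewrite e mul2n odd_double.
    by rewrite oddS => /negbFE ->.
Qed.

Local Open Scope ring_scope.

Lemma bigmin_prop (R : realDomainType) (z : R) (l : seq R) :
  (forall v, v \in l -> \big[Order.min/z]_(w <- l) w <= v) /\
  (\big[Order.min/z]_(w <- l) w = z \/ \big[Order.min/z]_(w <- l) w \in l).
Proof.
elim: l => [|v l [IH1 IH2]]; first by rewrite big_nil; split => //; left.
rewrite big_cons; split.
  move=> w; rewrite inE => /orP[/eqP->|wl]; first by rewrite ge_min lexx.
  by rewrite ge_min IH1 // orbT.
rewrite minEle; case: ifP => _; first by right; rewrite mem_head.
by case: IH2 => [->|h]; [left | right; rewrite inE h orbT].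
Qed.

Lemma seqmin_le (R : realDomainType) (l : seq R) v : v \in l -> seqmin l <= v.
Proof. move=> h; have [H1 _] := bigmin_prop _ (head 0 l) l; exact: H1. Qed.

Lemma seqmin_in (R : realDomainType) (l : seq R) : l != [::] -> seqmin l \in l.
Proof.
case: l => [|v l] // _; have [_ [H2|H2]] := bigmin_prop _ (head 0 (v :: l)) (v :: l).
  by rewrite /seqmin H2 /= mem_head.
by rewrite /seqmin.
Qed.

Lemma Hle (R : realDomainType) N (x : 'I_(2 * N) -> R) k (S : {set 'I_(2 * N)}) :
  (0 < k)%N -> admissible k S -> H x k <= \sum_(i in S) x i.
Proof.
move=> k0 hS; rewrite /H (_ : (k == 0%N) = false); last by case: k k0 hS.
apply: seqmin_le; apply: map_f; by rewrite mem_enum inE.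
Qed.

Lemma Hex (R : realDomainType) N (x : 'I_(2 * N) -> R) k :
  (0 < k)%N -> (exists S : {set 'I_(2 * N)}, admissible k S) ->
  exists A : {set 'I_(2 * N)}, admissible k A /\ H x k = \sum_(i in A) x i.
Proof.
move=> k0 [S hS]; rewrite /H (_ : (k == 0%N) = false); last by case: k k0 hS.
set l := map _ _.
have ne : l != [::].
  apply/eqP => e.
  have : (\sum_(i in S) x i) \in l by apply: map_f; rewrite mem_enum inE.
  by rewrite e.
have := seqmin_in _ _ ne; case/mapP => A; rewrite mem_enum inE => hA ->.
by exists A.
Qed.

Theorem mainTheorem5 (R : realFieldType) (N : nat) (hN : (2 <= N)%N)
    (x : 'I_(2 * N) -> R) (hx : forall i, 0 < x i)
    (k : nat) (hk : (k <= N - 2)%N) :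
  H x k + H x k.+2 >= 2 * H x k.+1.
Proof.
have n0 : (0 < 2 * N)%N by clear -hN; lia.
have [A [hAc [hAi hA]]] : exists A : {set 'I_(2 * N)},
    #|A| = k /\ indep (ind n0 A) /\ H x k = \sum_(i in A) x i.
  case: k hk => [|k'] hk'.
    exists set0; split; first by rewrite cards0.
    split; first by move=> m; rewrite /ind in_set0.
    by rewrite /H big_set0.
  have [A [hA e]] := @Hex R N x k'.+1 (ltn0Sn k') (@exists_adm N n0 k'.+1 ltac:(clear -hk' hN; lia)).
  exists A; split; first by case/and3P: hA => /eqP.
  by split; [exact: (@adm_indep _ n0 _ A hA) | exact: e].
have [B [hB eB]] := @Hex R N x k.+2 (isT : (0 < k.+2)%N) (@exists_adm N n0 k.+2 ltac:(clear -hk hN; lia)).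
have hBc : #|B| = k.+2 by case/and3P: hB => /eqP.
have hBi := @adm_indep _ n0 _ B hB.
have hs : (\sum_(0 <= m < 2 * N) nat_of_bool (ind n0 B m) =
          \sum_(0 <= m < 2 * N) nat_of_bool (ind n0 A m) + 2)%N.
  by rewrite -!card_ind hAc hBc addn2.
have [c [d [[pc pd ic id] [pt sm]]]] :=
  @core (2 * N) (ind n0 A) (ind n0 B) n0 (ind_per _ n0 A) (ind_per _ n0 B) hAi hBi hs.
pose C := setc (2 * N)%N c; pose D := setc (2 * N)%N d.
have sC : (\sum_(0 <= m < 2 * N) nat_of_bool (ind n0 C m) =
           \sum_(0 <= m < 2 * N) nat_of_bool (c m))%N.
  by apply: eq_bigr => m _; rewrite ind_setc.
have sD : (\sum_(0 <= m < 2 * N) nat_of_bool (ind n0 D m) =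
           \sum_(0 <= m < 2 * N) nat_of_bool (d m))%N.
  by apply: eq_bigr => m _; rewrite ind_setc.
have sCD : (\sum_(0 <= m < 2 * N) nat_of_bool (c m) + \sum_(0 <= m < 2 * N) nat_of_bool (d m) =
    \sum_(0 <= m < 2 * N) nat_of_bool (ind n0 A m) + \sum_(0 <= m < 2 * N) nat_of_bool (ind n0 B m))%N.
  by rewrite -!big_split; apply: eq_bigr => m _; apply: pt.
have cC : #|C| = k.+1.
  rewrite (card_ind _ n0) sC sm -card_ind hAc; clear; lia.
have cD : #|D| = k.+1.
  rewrite (card_ind _ n0) sD.
  move: sCD; rewrite sm hs -card_ind hAc.
  move: (\sum_(0 <= m < 2 * N) nat_of_bool (d m))%N => z; clear; lia.
have adC : admissible k.+1 C.
  apply: (@indep_adm (2 * N)%N n0) => // m; rewrite !ind_setc //; exact: ic.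
have adD : admissible k.+1 D.
  apply: (@indep_adm (2 * N)%N n0) => // m; rewrite !ind_setc //; exact: id.
have hC := @Hle R N x k.+1 C (isT : (0 < k.+1)%N) adC.
have hD := @Hle R N x k.+1 D (isT : (0 < k.+1)%N) adD.
have w : \sum_(i in C) x i + \sum_(i in D) x i = \sum_(i in A) x i + \sum_(i in B) x i.
  rewrite !(sum_ind _ _ n0) -!big_split /=; apply: eq_bigr => i _.
  rewrite -!mulrDl -!natrD !ind_setc //.
  by rewrite pt.
rewrite hA eB; lra.
Qed.
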